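(* Let $X$ be a topological space in which every open set is a union of countably many clopen sets. The following are equivalent: (1) every subspace of $X$ satisfies $\mathsf{U}_{fin}(\mathrm{O},\Gamma)$; (2) every $G_\delta$ subset of $X$ satisfies $\mathsf{U}_{fin}(\mathrm{O},\Gamma)$; (3) for every continuous $\Psi:X\to\mathrm{EF}$, $\Psi[X]$ is bounded; (4) $X$ satisfies $\mathsf{U}_{fin}(\mathrm{O},\Gamma)$ and $X$ is a $\sigma$ space.
   Context: A cover $\mathcal{U}$ of a space $Y$ is point-cofinite if it is infinite and each point of $Y$ belongs to all but finitely many members of $\mathcal{U}$. A space $Y$ satisfies $\mathsf{U}_{fin}(\mathrm{O},\Gamma)$ if whenever $\mathcal{U}_1,\mathcal{U}_2,\dots$ are countable open covers of $Y$ none of which contains a finite subcover, there are finite $\mathcal{F}_n\subseteq\mathcal{U}_n$ such that $\{\bigcup\mathcal{F}_n:n\in\mathbb{N}\}$ is a point-cofinite cover of $Y$. A space is a $\sigma$ space if each of its $G_\delta$ subsets is $F_\sigma$. Let $\overline{\mathbb{N}}=\mathbb{N}\cup\{\infty\}$ be the one-point compactification of $\mathbb{N}$, with $\overline{\mathbb{N}}^{\mathbb{N}}$ carrying the product topology; $\mathrm{EF}\subseteq\overline{\mathbb{N}}^{\mathbb{N}}$ is the subspace of those $f$ with $f(n)<\infty$ for all but finitely many $n$. A set $Y\subseteq\mathrm{EF}$ is bounded if there is $g\in\mathbb{N}^{\mathbb{N}}$ such that for each $f\in Y$, $f(n)\le g(n)$ for all but finitely many $n$. *)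

(* Defs.v *)
From Stdlib Require Import Arith List.
Import ListNotations.

Record topology (X : Type) := Topology {
  open : (X -> Prop) -> Prop;
  open_full : open (fun _ => True);
  open_inter : forall U V, open U -> open V -> open (fun x => U x /\ V x);
  open_union : forall F : (X -> Prop) -> Prop,
      (forall U, F U -> open U) -> open (fun x => exists U, F U /\ U x)
}.
Arguments open {X} t U.

Definition closed {X : Type} (T : topology X) (F : X -> Prop) : Prop :=
  open T (fun x => ~ F x).

Definition clopen {X : Type} (T : topology X) (C : X -> Prop) : Prop :=
  open T C /\ closed T C.

Definition Gdelta {X : Type} (T : topology X) (Y : X -> Prop) : Prop :=
  exists O : nat -> X -> Prop, (forall n, open T (O n)) /\
    (forall x, Y x <-> forall n, O n x).

Definition Fsigma {X : Type} (T : topology X) (Y : X -> Prop) : Prop :=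
  exists F : nat -> X -> Prop, (forall n, closed T (F n)) /\
    (forall x, Y x <-> exists n, F n x).

Definition sigma_space {X : Type} (T : topology X) : Prop :=
  forall Y, Gdelta T Y -> Fsigma T Y.

(* ---- Subspace Y of X (subspace topology). Subsets of Y are represented by
   subsets of X, identified when they agree on Y. ---- *)
Definition rel_eq {X : Type} (Y A B : X -> Prop) : Prop :=
  forall y, Y y -> (A y <-> B y).

Definition rel_open {X : Type} (T : topology X) (Y V : X -> Prop) : Prop :=
  exists O, open T O /\ rel_eq Y V O.

Definition covers {X : Type} (Y : X -> Prop) (U : nat -> X -> Prop) : Prop :=
  forall y, Y y -> exists n, U n y.

Definition has_finite_subcover {X : Type} (Y : X -> Prop) (U : nat -> X -> Prop) : Prop :=
  exists l : list nat, forall y, Y y -> exists n, In n l /\ U n y.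

Definition infinite_family {X : Type} (Y : X -> Prop) (W : nat -> X -> Prop) : Prop :=
  ~ exists L : list nat, forall k, exists j, In j L /\ rel_eq Y (W k) (W j).

Definition point_cofinite {X : Type} (Y : X -> Prop) (W : nat -> X -> Prop) : Prop :=
  infinite_family Y W /\
  forall y, Y y -> exists L : list nat,
    forall k, ~ W k y -> exists j, In j L /\ rel_eq Y (W k) (W j).

(* U_fin(O, Gamma) for the subspace Y of X.  A countable open cover is given as
   (the range of) a sequence of open subsets of Y; a finite subfamily F_k of
   U_k is given by a finite list of indices. *)
Definition Ufin_O_Gamma {X : Type} (T : topology X) (Y : X -> Prop) : Prop :=
  forall U : nat -> nat -> X -> Prop,
    (forall k n, rel_open T Y (U k n)) ->
    (forall k, covers Y (U k)) ->
    (forall k, ~ has_finite_subcover Y (U k)) ->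
    exists F : nat -> list nat,
      point_cofinite Y (fun k x => exists n, In n (F k) /\ U k n x).

(* ---- Nbar = N ∪ {∞} as option nat (None = ∞), one-point compactification of
   discrete N: U is open iff (∞ ∈ U -> U contains a cofinal segment of N). ---- *)
Definition nbar := option nat.

Definition nbar_open (U : nbar -> Prop) : Prop :=
  U None -> exists N, forall n, N <= n -> U (Some n).

Definition basic_nbhd (l : list (nat * (nbar -> Prop))) (g : nat -> nbar) : Prop :=
  forall p, In p l -> snd p (g (fst p)).

Definition prod_open (W : (nat -> nbar) -> Prop) : Prop :=
  forall f, W f -> exists l : list (nat * (nbar -> Prop)),
    (forall p, In p l -> nbar_open (snd p)) /\ basic_nbhd l f /\
    (forall g, basic_nbhd l g -> W g).

Definition EF (f : nat -> nbar) : Prop :=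
  exists N, forall n, N <= n -> f n <> None.

Definition EF_open (V : (nat -> nbar) -> Prop) : Prop :=
  exists O, prod_open O /\ forall f, EF f -> (V f <-> O f).

Definition continuous_to_EF {X : Type} (T : topology X) (Psi : X -> nat -> nbar) : Prop :=
  (forall x, EF (Psi x)) /\
  (forall V, EF_open V -> open T (fun x => V (Psi x))).

Definition nbar_le (a : nbar) (m : nat) : Prop :=
  match a with Some k => k <= m | None => False end.

Definition bounded (Y : (nat -> nbar) -> Prop) : Prop :=
  exists g : nat -> nat, forall f, Y f ->
    exists N, forall n, N <= n -> nbar_le (f n) (g n).

(* Main.v *)
Require Import Defs.
From Stdlib Require Import Arith List Lia Cantor Classical ClassicalEpsilon FunctionalExtensionality PropExtensionality.

Definition cid := constructive_indefinite_description.

Lemma open_ext {X} (T : topology X) (U V : X -> Prop) :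
  (forall x, U x <-> V x) -> open T U -> open T V.
Proof.
  intros H HU. assert (U = V) as <-; [|exact HU].
  apply functional_extensionality; intro x; apply propositional_extensionality; auto.
Qed.

Lemma open_or {X} (T : topology X) (U V : X -> Prop) :
  open T U -> open T V -> open T (fun x => U x \/ V x).
Proof.
  intros HU HV.
  apply (open_ext T (fun x => exists S, (S = U \/ S = V) /\ S x)).
  - intro x; split.
    + intros [S [[-> | ->] H]]; auto.
    + intros [H|H]; eauto.
  - apply open_union. intros S [-> | ->]; auto.
Qed.

Lemma open_exists {X} (T : topology X) (P : nat -> X -> Prop) :
  (forall i, open T (P i)) -> open T (fun x => exists i, P i x).
Proof.
  intros H.
  apply (open_ext T (fun x => exists S, (exists i, S = P i) /\ S x)).
  - intro x; split.
    + intros [S [[i ->] Hs]]; eauto.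
    + intros [i Hi]. exists (P i); eauto.
  - apply open_union. intros S [i ->]; auto.
Qed.

Lemma open_empty {X} (T : topology X) : open T (fun _ => False).
Proof.
  apply (open_ext T (fun x => exists S, False /\ S x)).
  - intro x; split; [intros [S [[] _]] | intros []].
  - apply open_union. intros S [].
Qed.

Lemma open_const_and {X} (T : topology X) (P : Prop) (U : X -> Prop) :
  open T U -> open T (fun x => P /\ U x).
Proof.
  intros HU. destruct (classic P) as [HP|HP].
  - apply (open_ext T U); [intro; tauto | auto].
  - apply (open_ext T (fun _ => False)); [intro; tauto | apply open_empty].
Qed.

Lemma open_fin_all {X} (T : topology X) (P : nat -> X -> Prop) K :
  (forall i, i < K -> open T (P i)) -> open T (fun x => forall i, i < K -> P i x).
Proof.
  induction K as [|K IH]; intros H.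
  - apply (open_ext T (fun _ => True)); [intro; split; [intros _ i Hi; lia | auto] | apply open_full].
  - apply (open_ext T (fun x => (forall i, i < K -> P i x) /\ P K x)).
    + intro x; split.
      * intros [H1 H2] i Hi. destruct (Nat.eq_dec i K) as [->|Hn]; auto. apply H1; lia.
      * intros H1; split; auto.
    + apply open_inter; auto.
Qed.

Lemma open_fin_all_le {X} (T : topology X) (P : nat -> X -> Prop) K :
  (forall i, i <= K -> open T (P i)) -> open T (fun x => forall i, i <= K -> P i x).
Proof.
  intros H. apply (open_ext T (fun x => forall i, i < S K -> P i x)).
  - intro x; split; intros H1 i Hi; apply H1; lia.
  - apply open_fin_all. intros; apply H; lia.
Qed.

Lemma clopen_ext {X} (T : topology X) (U V : X -> Prop) :
  (forall x, U x <-> V x) -> clopen T U -> clopen T V.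
Proof.
  intros H [H1 H2]. split.
  - apply (open_ext T U); auto.
  - unfold closed in *. apply (open_ext T (fun x => ~ U x)); auto.
    intro x; rewrite H; tauto.
Qed.

Lemma closed_and {X} (T : topology X) (U V : X -> Prop) :
  closed T U -> closed T V -> closed T (fun x => U x /\ V x).
Proof.
  unfold closed; intros HU HV.
  apply (open_ext T (fun x => ~ U x \/ ~ V x)).
  - intro x; tauto.
  - apply open_or; auto.
Qed.

Definition least {X} (D : nat -> X -> Prop) (x : X) (p : nat) : Prop :=
  D p x /\ forall q, q < p -> ~ D q x.

Lemma least_exists {X} (D : nat -> X -> Prop) x :
  (exists p, D p x) -> exists p, least D x p.
Proof.
  intros [p Hp]. revert Hp.
  induction p as [p IH] using (well_founded_induction lt_wf). intros Hp.
  destruct (classic (exists q, q < p /\ D q x)) as [[q [Hq Dq]]|Hn].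
  - exact (IH q Hq Dq).
  - exists p; split; auto. intros q Hq Dq; apply Hn; eauto.
Qed.

Lemma least_unique {X} (D : nat -> X -> Prop) x p q :
  least D x p -> least D x q -> p = q.
Proof.
  intros [H1 H2] [H3 H4].
  destruct (lt_eq_lt_dec p q) as [[H|H]|H]; auto.
  - exfalso; apply (H4 p); auto.
  - exfalso; apply (H2 q); auto.
Qed.

Lemma least_clopen {X} (T : topology X) (D : nat -> X -> Prop) p :
  (forall q, clopen T (D q)) -> clopen T (fun x => least D x p).
Proof.
  intros HD. split.
  - apply (open_ext T (fun x => D p x /\ (fun x => forall q, q < p -> ~ D q x) x)).
    + intro; unfold least; tauto.
    + apply open_inter. apply HD. apply open_fin_all. intros q _. apply (HD q).
  - unfold closed.
    apply (open_ext T (fun x => ~ D p x \/ exists q, q < p /\ D q x)).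
    + intro x; unfold least; split.
      * intros [H|[q [Hq Dq]]] [H1 H2]; auto. apply (H2 q); auto.
      * intros H. destruct (classic (D p x)) as [Dp|Dp]; auto. right.
        apply NNPP; intro Hn. apply H; split; auto. intros q Hq Dq. apply Hn; eauto.
    + apply open_or. apply (HD p). apply open_exists. intro q. apply open_const_and. apply HD.
Qed.

Definition minval {X} (D : nat -> X -> Prop) (x : X) : nbar :=
  match excluded_middle_informative (exists p, D p x) with
  | left H => Some (proj1_sig (cid _ _ (least_exists D x H)))
  | right _ => None
  end.

Lemma minval_Some {X} (D : nat -> X -> Prop) x p : minval D x = Some p <-> least D x p.
Proof.
  unfold minval. destruct (excluded_middle_informative _) as [H|H].
  - destruct (cid _ _ _) as [q Hq]; simpl. split.
    + intros E; injection E as <-; auto.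
    + intros Hp; f_equal; apply (least_unique D x); auto.
  - split; [discriminate|]. intros [Hp _]; exfalso; apply H; eauto.
Qed.

Lemma minval_None {X} (D : nat -> X -> Prop) x : minval D x = None <-> ~ exists p, D p x.
Proof.
  unfold minval. destruct (excluded_middle_informative _) as [H|H].
  - split; [discriminate | tauto].
  - tauto.
Qed.

Lemma coord_cont {X} (T : topology X) (f : X -> nbar) :
  (forall p, clopen T (fun x => f x = Some p)) ->
  forall V, nbar_open V -> open T (fun x => V (f x)).
Proof.
  intros Hf V HV. destruct (classic (V None)) as [HN|HN].
  - destruct (HV HN) as [N HNn].
    apply (open_ext T (fun x => forall p, p < N -> ~ (~ V (Some p) /\ f x = Some p))).
    + intro x; split.
      * intros H. destruct (f x) as [n|] eqn:E; auto.
        destruct (le_lt_dec N n) as [Hl|Hl]; auto.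
        apply NNPP; intro Hv. apply (H n Hl); auto.
      * intros H p _ [Hv E]. rewrite E in H; auto.
    + apply open_fin_all. intros p _. destruct (classic (V (Some p))) as [Hv|Hv].
      * apply (open_ext T (fun _ => True)); [intro; tauto | apply open_full].
      * apply (open_ext T (fun x => ~ f x = Some p)); [intro; tauto | apply (Hf p)].
  - apply (open_ext T (fun x => exists p, V (Some p) /\ f x = Some p)).
    + intro x; split.
      * intros [p [Hv E]]; rewrite E; auto.
      * intros H. destruct (f x) as [n|] eqn:E; [eauto | contradiction].
    + apply open_exists. intro p. apply open_const_and. apply (Hf p).
Qed.

Lemma basic_open {X} (T : topology X) Psi : continuous_to_EF T Psi ->
  forall l, (forall p, In p l -> nbar_open (snd p)) ->
  open T (fun x => basic_nbhd l (Psi x)).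
Proof.
  intros [_ Hc] l Hl. apply Hc. exists (basic_nbhd l). split.
  - intros f Hf. exists l. auto.
  - intros; reflexivity.
Qed.

Lemma coord_open {X} (T : topology X) Psi : continuous_to_EF T Psi ->
  forall n V, nbar_open V -> open T (fun x => V (Psi x n)).
Proof.
  intros Hc n V HV.
  apply (open_ext T (fun x => basic_nbhd ((n, V) :: nil) (Psi x))).
  - intro x; unfold basic_nbhd; simpl; split.
    + intros H. apply (H (n, V)); auto.
    + intros H p [<- | []]; exact H.
  - apply basic_open; auto. intros p [<- | []]; exact HV.
Qed.

Lemma cont_of_coords {X} (T : topology X) (Psi : X -> nat -> nbar) :
  (forall x, EF (Psi x)) ->
  (forall n V, nbar_open V -> open T (fun x => V (Psi x n))) ->
  continuous_to_EF T Psi.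
Proof.
  intros HEF Hc. split; auto.
  assert (Hb : forall l, (forall p, In p l -> nbar_open (snd p)) -> open T (fun x => basic_nbhd l (Psi x))).
  { induction l as [|[n U] l IH]; intros Hl.
    - apply (open_ext T (fun _ => True)); [|apply open_full].
      intro x; unfold basic_nbhd; simpl; split; [intros _ p [] | auto].
    - apply (open_ext T (fun x => U (Psi x n) /\ basic_nbhd l (Psi x))).
      + intro x; unfold basic_nbhd; simpl; split.
        * intros [H1 H2] p [<- | Hp]; auto.
        * intros H; split; [apply (H (n, U)); auto | intros p Hp; apply H; auto].
      + apply open_inter.
        * apply Hc. apply (Hl (n, U)); simpl; auto.
        * apply IH. intros p Hp; apply Hl; simpl; auto. }
  intros V [O [HO HV]].
  apply (open_ext T (fun x => exists S, (exists l, (forall p, In p l -> nbar_open (snd p)) /\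
           (forall g, basic_nbhd l g -> O g) /\ (forall y, S y <-> basic_nbhd l (Psi y))) /\ S x)).
  - intro x. rewrite (HV (Psi x) (HEF x)). split.
    + intros [S [[l [H1 [H2 H3]]] Hs]]. apply H2. apply H3; auto.
    + intros Ho. destruct (HO (Psi x) Ho) as [l [H1 [H2 H3]]].
      exists (fun y => basic_nbhd l (Psi y)). split; auto. exists l; split; auto. split; auto. tauto.
  - apply open_union. intros S [l [H1 [H2 H3]]].
    apply (open_ext T (fun y => basic_nbhd l (Psi y))); [intro; rewrite H3; tauto | auto].
Qed.

Lemma bound_fin (P : nat -> nat -> Prop) k :
  (forall i n n', n <= n' -> P i n -> P i n') ->
  (forall i, i <= k -> exists n, P i n) -> exists n, forall i, i <= k -> P i n.
Proof.
  intros Hm. induction k as [|k IH]; intros H.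
  - destruct (H 0 (le_n 0)) as [n Hn]. exists n. intros i Hi. assert (i = 0) as -> by lia. auto.
  - destruct IH as [n Hn]. intros; apply H; lia.
    destruct (H (S k) (le_n _)) as [n' Hn'].
    exists (max n n'). intros i Hi. destruct (Nat.eq_dec i (S k)) as [->|Hne].
    + apply Hm with n'; auto; lia.
    + apply Hm with n; [lia | apply Hn; lia].
Qed.

Definition maxl (l : list nat) : nat := fold_right max 0 l.

Lemma maxl_In l n : In n l -> n <= maxl l.
Proof. induction l as [|a l IH]; simpl; [tauto|]. intros [->|H]; [lia|]. specialize (IH H); lia. Qed.

Fixpoint bigmax (f : nat -> nat) (n : nat) : nat :=
  match n with 0 => f 0 | S n' => max (bigmax f n') (f (S n')) end.

Lemma bigmax_ge f m n : m <= n -> f m <= bigmax f n.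
Proof.
  induction n as [|n IH]; intros H; simpl.
  - assert (m = 0) as -> by lia; lia.
  - destruct (Nat.eq_dec m (S n)) as [->|Hn]; [lia|]. specialize (IH ltac:(lia)); lia.
Qed.

Fixpoint kseq (p : nat -> nat) (i : nat) : nat :=
  match i with 0 => p 0 | S i' => p (kseq p i') end.

Lemma kseq_ge p : (forall B, B < p B) -> forall i, i <= kseq p i.
Proof. intros H; induction i as [|i IH]; simpl; [lia|]. specialize (H (kseq p i)); lia. Qed.
Definition UfinI {X} (T : topology X) (Y : X -> Prop) : Prop :=
  forall U : nat -> nat -> X -> Prop,
    (forall k n, open T (U k n)) -> (forall k, covers Y (U k)) ->
    (forall k, ~ has_finite_subcover Y (U k)) ->
    exists F : nat -> nat, forall y, Y y -> exists N, forall k, N <= k ->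
      exists n, n <= F k /\ U k n y.

Lemma ufin_mono {X} (T : topology X) Y : UfinI T Y -> forall U : nat -> nat -> X -> Prop,
  (forall k n, open T (U k n)) -> (forall k, covers Y (U k)) ->
  (forall k n n' x, n <= n' -> U k n x -> U k n' x) ->
  (forall k k' n x, k <= k' -> U k' n x -> U k n x) ->
  exists h : nat -> nat, forall y, Y y -> exists N, forall k, N <= k -> U k (h k) y.
Proof.
  intros HY U HO HC Hn Hk.
  destruct (classic (exists k0, ~ has_finite_subcover Y (U k0))) as [[k0 Hk0]|Hall].
  - destruct (HY (fun k => U (k0 + k))) as [F HF].
    + intros; apply HO.
    + intros; apply HC.
    + intros k [l Hl]. apply Hk0. exists l. intros y Yy.
      destruct (Hl y Yy) as [n [Hn' Hu]]. exists n; split; auto.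
      apply Hk with (k0 + k); [lia | auto].
    + exists F. intros y Yy. destruct (HF y Yy) as [N HN]. exists N. intros k Hkk.
      destruct (HN k Hkk) as [n [Hnf Hu]]. apply Hn with n; auto.
      apply Hk with (k0 + k); [lia | auto].
  - assert (H : forall k, exists N, forall y, Y y -> U k N y).
    { intro k. assert (H := NNPP _ (fun H => Hall (ex_intro _ k H))).
      destruct H as [l Hl]. exists (maxl l). intros y Yy.
      destruct (Hl y Yy) as [n [Hin Hu]]. apply Hn with n; auto. apply maxl_In; auto. }
    exists (fun k => proj1_sig (cid _ _ (H k))).
    intros y Yy. exists 0. intros k _. destruct (cid _ _ (H k)) as [N HN]; simpl; auto.
Qed.

Lemma ufin_of_ufinI {X} (T : topology X) Y : UfinI T Y -> Ufin_O_Gamma T Y.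
Proof.
  intros HI U HU HC HF.
  set (O := fun k n => proj1_sig (cid _ _ (HU k n))).
  assert (HOo : forall k n, open T (O k n)).
  { intros; unfold O; destruct (cid _ _ _) as [? [? ?]]; auto. }
  assert (HOe : forall k n, rel_eq Y (U k n) (O k n)).
  { intros; unfold O; destruct (cid _ _ _) as [? [? ?]]; auto. }
  destruct (HI O HOo) as [Fb HFb].
  - intros k y Yy. destruct (HC k y Yy) as [n Hn]. exists n. apply HOe; auto.
  - intros k [l Hl]. apply (HF k). exists l. intros y Yy.
    destruct (Hl y Yy) as [n [Hin Ho]]. exists n; split; auto. apply HOe; auto.
  - exists (fun k => seq 0 (S (Fb k))).
    assert (HW : forall y, Y y -> exists N, forall k, N <= k ->
               exists n, In n (seq 0 (S (Fb k))) /\ U k n y).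
    { intros y Yy. destruct (HFb y Yy) as [N HN]. exists N. intros k Hk.
      destruct (HN k Hk) as [n [Hn Ho]]. exists n. split.
      - apply in_seq; lia.
      - apply HOe; auto. }
    split.
    + intros [L HL].
      assert (Hnc : forall j, exists y, Y y /\ ~ exists n, In n (seq 0 (S (Fb j))) /\ U j n y).
      { intro j. apply NNPP. intro Hn. apply (HF j). exists (seq 0 (S (Fb j))).
        intros y Yy. apply NNPP; intro Hw. apply Hn. exists y. split; auto. }
      assert (Hb : forall L', exists K, forall j, In j L' -> exists y, Y y /\
                (~ exists n, In n (seq 0 (S (Fb j))) /\ U j n y) /\
                forall k, K <= k -> exists n, In n (seq 0 (S (Fb k))) /\ U k n y).
      { induction L' as [|j L' IH].
        - exists 0; intros j [].
        - destruct IH as [K HK]. destruct (Hnc j) as [y [Yy Hy]].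
          destruct (HW y Yy) as [N HN]. exists (max K N). intros j' [<- | Hj'].
          + exists y; repeat split; auto. intros; apply HN; lia.
          + destruct (HK j' Hj') as [y' [? [? H']]]. exists y'; repeat split; auto.
            intros; apply H'; lia. }
      destruct (Hb L) as [K HK]. destruct (HL K) as [j [Hj Heq]].
      destruct (HK j Hj) as [y [Yy [Hny Hall]]]. apply Hny.
      apply (proj1 (Heq y Yy)). apply Hall. lia.
    + intros y Yy. destruct (HW y Yy) as [N HN]. exists (seq 0 N). intros k Hk.
      exists k. split.
      * apply in_seq. destruct (le_lt_dec N k) as [Hl|Hl]; [exfalso; apply Hk; apply HN; auto | lia].
      * intros z _; tauto.
Qed.

Definition Wm {X} (U : nat -> nat -> X -> Prop) k n x :=
  forall i, i <= k -> exists m, m <= n /\ U i m x.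

Lemma Wm_open {X} (T : topology X) U : (forall k n, open T (U k n)) ->
  forall k n, open T (Wm U k n).
Proof.
  intros HO k n. unfold Wm. apply open_fin_all_le. intros i _.
  apply open_exists. intro m. apply open_const_and. apply HO.
Qed.

Lemma Wm_cover {X} (U : nat -> nat -> X -> Prop) y :
  (forall i, exists m, U i m y) -> forall k, exists n, Wm U k n y.
Proof.
  intros H k. apply (bound_fin (fun i n => exists m, m <= n /\ U i m y)).
  - intros i n n' Hn [m [Hm Hu]]. exists m; split; auto; lia.
  - intros i _. destruct (H i) as [m Hm]. exists m, m; auto.
Qed.

Lemma Wm_mono_n {X} (U : nat -> nat -> X -> Prop) k n n' x : n <= n' -> Wm U k n x -> Wm U k n' x.
Proof. intros Hn H i Hi. destruct (H i Hi) as [m [Hm Hu]]. exists m; split; auto; lia. Qed.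

Lemma Wm_mono_k {X} (U : nat -> nat -> X -> Prop) k k' n x : k <= k' -> Wm U k' n x -> Wm U k n x.
Proof. intros Hk H i Hi. apply H; lia. Qed.

Lemma ufinI_of_ufin {X} (T : topology X) Y : Ufin_O_Gamma T Y -> UfinI T Y.
Proof.
  intros HU U HO HC HF.
  destruct (HU (Wm U)) as [F' [Hinf Hcof]].
  - intros k n. exists (Wm U k n). split; [apply Wm_open; auto | intros y _; tauto].
  - intros k y Yy. apply Wm_cover. intro i. apply (HC i y Yy).
  - intros k [l Hl]. apply (HF 0). exists (seq 0 (S (maxl l))). intros y Yy.
    destruct (Hl y Yy) as [n [Hin Hw]]. destruct (Hw 0 (le_0_n _)) as [m [Hm Hu]].
    exists m; split; auto. apply in_seq. pose proof (maxl_In l n Hin). lia.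
  - assert (Hpick : forall B, exists k, forall j, j <= B ->
       ~ rel_eq Y (fun x => exists n, In n (F' k) /\ Wm U k n x)
                  (fun x => exists n, In n (F' j) /\ Wm U j n x)).
    { intro B. apply NNPP. intro Hn. apply Hinf. exists (seq 0 (S B)). intro k.
      apply NNPP; intro Hk. apply Hn. exists k. intros j Hj Heq. apply Hk. exists j.
      split; auto. apply in_seq; lia. }
    set (pick := fun B => proj1_sig (cid _ _ (Hpick B))).
    assert (Hpk : forall B j, j <= B ->
       ~ rel_eq Y (fun x => exists n, In n (F' (pick B)) /\ Wm U (pick B) n x)
                  (fun x => exists n, In n (F' j) /\ Wm U j n x)).
    { intros B. unfold pick. destruct (cid _ _ (Hpick B)) as [k Hk]; simpl. auto. }
    assert (Hpgt : forall B, B < pick B).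
    { intro B. destruct (le_lt_dec (pick B) B) as [Hl|Hl]; auto. exfalso.
      apply (Hpk B (pick B) Hl). intros y _; tauto. }
    exists (fun k => maxl (F' (kseq pick k))).
    intros y Yy. destruct (Hcof y Yy) as [L HL]. exists (S (maxl L)). intros k Hk.
    destruct k as [|k']; [lia|].
    assert (Hw : exists n, In n (F' (kseq pick (S k'))) /\ Wm U (kseq pick (S k')) n y).
    { apply NNPP. intro H. destruct (HL _ H) as [j [Hj Heq]].
      simpl in Heq. apply (Hpk (kseq pick k') j); auto.
      pose proof (maxl_In L j Hj). pose proof (kseq_ge pick Hpgt k'). lia. }
    destruct Hw as [n [Hin Hw]].
    destruct (Hw (S k')) as [m [Hm Hu]].
    { pose proof (kseq_ge pick Hpgt (S k')); lia. }
    exists m; split; auto. pose proof (maxl_In _ _ Hin). lia.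
Qed.
Lemma p2_p3 {X} (T : topology X) :
  (forall Y : X -> Prop, Gdelta T Y -> Ufin_O_Gamma T Y) ->
  forall Psi, continuous_to_EF T Psi -> bounded (fun f => exists x, f = Psi x).
Proof.
  intros H2 Psi Hc.
  assert (Hm : forall m, exists h : nat -> nat, forall y, (forall n, Psi y (m + n) <> None) ->
             exists N, forall k, N <= k -> nbar_le (Psi y (m + k)) (h k)).
  { intro m.
    assert (HG : UfinI T (fun y => forall n, Psi y (m + n) <> None)).
    { apply ufinI_of_ufin. apply H2. exists (fun n y => Psi y (m + n) <> None). split.
      - intro n. apply (coord_open T Psi Hc (m + n) (fun a => a <> None)).
        intros Hn; exfalso; apply Hn; reflexivity.
      - intro; reflexivity. }
    destruct (ufin_mono T _ HG (fun k n y => forall i, i <= k -> nbar_le (Psi y (m + i)) n)) as [h Hh].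
    - intros k n. apply open_fin_all_le. intros i _.
      apply (coord_open T Psi Hc (m + i) (fun a => nbar_le a n)). intros H; destruct H.
    - intros k y Gy. apply (bound_fin (fun i n => nbar_le (Psi y (m + i)) n)).
      + intros i n n' Hnn. destruct (Psi y (m + i)); simpl; lia.
      + intros i _. specialize (Gy i). destruct (Psi y (m + i)) as [a|];
          [exists a; simpl; lia | congruence].
    - intros k n n' y Hnn H i Hi. specialize (H i Hi).
      destruct (Psi y (m + i)); simpl in *; lia.
    - intros k k' n y Hkk H i Hi. apply H. lia.
    - exists h. intros y Gy. destruct (Hh y Gy) as [N HN]. exists N. intros k Hk.
      apply (HN k Hk k). lia. }
  set (hh := fun m => proj1_sig (cid _ _ (Hm m))).
  assert (Hhh : forall m y, (forall n, Psi y (m + n) <> None) ->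
             exists N, forall k, N <= k -> nbar_le (Psi y (m + k)) (hh m k)).
  { intros m. unfold hh. destruct (cid _ _ (Hm m)) as [h Hh]; simpl; auto. }
  exists (fun n => bigmax (fun m => hh m (n - m)) n).
  intros f [x ->]. destruct (proj1 Hc x) as [M HM].
  destruct (Hhh M x) as [N HN].
  { intros n. apply HM. lia. }
  exists (M + N). intros n Hn. specialize (HN (n - M) ltac:(lia)).
  replace (M + (n - M)) with n in HN by lia.
  pose proof (bigmax_ge (fun m => hh m (n - m)) M n ltac:(lia)). simpl in H.
  destruct (Psi x n); simpl in *; lia.
Qed.

Lemma p3_ufin {X} (T : topology X)
  (Hclopen : forall U, open T U ->
     exists C : nat -> X -> Prop, (forall n, clopen T (C n)) /\
       (forall x, U x <-> exists n, C n x)) :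
  (forall Psi : X -> nat -> nbar, continuous_to_EF T Psi ->
      bounded (fun f => exists x, f = Psi x)) ->
  UfinI T (fun _ => True).
Proof.
  intros H3 U HO HC HF.
  set (Cl := fun k n => proj1_sig (cid _ _ (Hclopen (U k n) (HO k n)))).
  assert (Clc : forall k n j, clopen T (Cl k n j)).
  { intros; unfold Cl; destruct (cid _ _ _) as [? [? ?]]; auto. }
  assert (Cle : forall k n x, U k n x <-> exists j, Cl k n j x).
  { intros; unfold Cl; destruct (cid _ _ _) as [? [? ?]]; auto. }
  set (D := fun k p x => Cl k (fst (Cantor.of_nat p)) (snd (Cantor.of_nat p)) x).
  set (Psi := fun x k => minval (D k) x).
  assert (HPs : forall x k, exists p, Psi x k = Some p).
  { intros x k. destruct (HC k x I) as [n Hn]. apply Cle in Hn. destruct Hn as [j Hj].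
    destruct (least_exists (D k) x) as [p Hp].
    - exists (Cantor.to_nat (n, j)). unfold D. rewrite Cantor.cancel_of_to. exact Hj.
    - exists p. apply minval_Some; auto. }
  assert (Hcont : continuous_to_EF T Psi).
  { apply cont_of_coords.
    - intro x. exists 0. intros n _ E. destruct (HPs x n) as [p Hp]. congruence.
    - intros k V HV. apply coord_cont; auto. intro p.
      apply (clopen_ext T (fun x => least (D k) x p)).
      + intro x. unfold Psi. rewrite minval_Some. tauto.
      + apply least_clopen. intro q. apply Clc. }
  destruct (H3 Psi Hcont) as [g Hg].
  exists g. intros x _. destruct (Hg (Psi x) (ex_intro _ x eq_refl)) as [N HN].
  exists N. intros k Hk. specialize (HN k Hk).
  destruct (HPs x k) as [p Hp]. rewrite Hp in HN. simpl in HN.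
  apply minval_Some in Hp. destruct Hp as [Hd _].
  exists (fst (Cantor.of_nat p)). split.
  - pose proof (Cantor.to_nat_non_decreasing (fst (Cantor.of_nat p)) (snd (Cantor.of_nat p))) as H.
    rewrite <- surjective_pairing, Cantor.cancel_to_of in H. lia.
  - apply Cle. exists (snd (Cantor.of_nat p)). exact Hd.
Qed.

Fixpoint Op {X} (O : nat -> X -> Prop) n : X -> Prop :=
  match n with 0 => fun _ => True | S n' => fun x => Op O n' x /\ O n' x end.

Lemma Op_open {X} (T : topology X) O : (forall n, open T (O n)) -> forall n, open T (Op O n).
Proof.
  intros HO n; induction n as [|n IH]; simpl.
  - apply open_full.
  - apply open_inter; auto.
Qed.

Lemma Op_mono {X} (O : nat -> X -> Prop) x a b : Op O a x -> b <= a -> Op O b x.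
Proof.
  induction a as [|a IH]; intros H Hb.
  - assert (b = 0) as -> by lia; exact H.
  - destruct (Nat.eq_dec b (S a)) as [->|Hn]; auto. apply IH; [apply H | lia].
Qed.

Lemma Op_all {X} (O : nat -> X -> Prop) x : (forall n, O n x) <-> (forall n, Op O n x).
Proof.
  split.
  - intros H n; induction n; simpl; auto.
  - intros H n. exact (proj2 (H (S n))).
Qed.

Lemma Op_break {X} (O : nat -> X -> Prop) x : ~ (forall n, Op O n x) ->
  exists n, Op O n x /\ ~ Op O (S n) x.
Proof.
  intros H. apply not_all_ex_not in H. destruct H as [m Hm].
  induction m as [|m IH].
  - exfalso; apply Hm; simpl; auto.
  - destruct (classic (Op O m x)) as [H|H]; eauto.
Qed.

Lemma p3_sigma {X} (T : topology X)
  (Hclopen : forall U, open T U ->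
     exists C : nat -> X -> Prop, (forall n, clopen T (C n)) /\
       (forall x, U x <-> exists n, C n x)) :
  (forall Psi : X -> nat -> nbar, continuous_to_EF T Psi ->
      bounded (fun f => exists x, f = Psi x)) ->
  sigma_space T.
Proof.
  intros H3 G [O [HO HG]].
  pose proof (Op_open T O HO) as HOp.
  set (Dc := fun n => proj1_sig (cid _ _ (Hclopen (Op O n) (HOp n)))).
  assert (Dcc : forall n j, clopen T (Dc n j)).
  { intros; unfold Dc; destruct (cid _ _ _) as [? [? ?]]; auto. }
  assert (Dce : forall n x, Op O n x <-> exists j, Dc n j x).
  { intros; unfold Dc; destruct (cid _ _ _) as [? [? ?]]; auto. }
  set (A := fun c x => ~ Op O (S (fst (Cantor.of_nat c))) x /\
                       least (Dc (fst (Cantor.of_nat c))) x (snd (Cantor.of_nat c))).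
  assert (Aclosed : forall c, closed T (A c)).
  { intro c. unfold closed.
    apply (open_ext T (fun x => Op O (S (fst (Cantor.of_nat c))) x \/
                                ~ least (Dc (fst (Cantor.of_nat c))) x (snd (Cantor.of_nat c)))).
    - intro x; unfold A. split; [tauto|]. intros H.
      destruct (classic (Op O (S (fst (Cantor.of_nat c))) x)); tauto.
    - apply open_or. apply HOp.
      apply (least_clopen T (Dc (fst (Cantor.of_nat c))) (snd (Cantor.of_nat c))).
      intro; apply Dcc. }
  set (Hc := fun c => proj1_sig (cid _ _ (Hclopen (fun x => ~ A c x) (Aclosed c)))).
  assert (Hcc : forall c i, clopen T (Hc c i)).
  { intros; unfold Hc; destruct (cid _ _ _) as [? [? ?]]; auto. }
  assert (Hce : forall c x, ~ A c x <-> exists i, Hc c i x).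
  { intros; unfold Hc; destruct (cid _ _ _) as [? [? ?]]; auto. }
  set (Psi := fun x c => minval (Hc c) x).
  assert (PsiNone : forall x c, Psi x c = None <-> A c x).
  { intros. unfold Psi. rewrite minval_None. rewrite <- Hce. split; [apply NNPP | auto]. }
  assert (Hcont : continuous_to_EF T Psi).
  { apply cont_of_coords.
    - intro x. destruct (classic (forall n, Op O n x)) as [Hx|Hx].
      + exists 0. intros c _ E. apply PsiNone in E. destruct E as [E _]. apply E, Hx.
      + destruct (Op_break O x Hx) as [n [H1 H2]].
        destruct (proj1 (Dce n x) H1) as [j0 Hj0].
        destruct (least_exists (Dc n) x (ex_intro _ j0 Hj0)) as [j Hj].
        exists (S (Cantor.to_nat (n, j))). intros c Hc' E. apply PsiNone in E.
        destruct E as [E1 E2].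
        assert (En : fst (Cantor.of_nat c) = n).
        { assert (Hop : Op O (fst (Cantor.of_nat c)) x).
          { apply Dce. exists (snd (Cantor.of_nat c)). apply E2. }
          destruct (lt_eq_lt_dec (fst (Cantor.of_nat c)) n) as [[Hl|Hl]|Hl]; auto.
          - exfalso. apply E1. apply (Op_mono O x n); auto.
          - exfalso. apply H2. apply (Op_mono O x (fst (Cantor.of_nat c))); auto. }
        rewrite En in E2.
        assert (Ej : snd (Cantor.of_nat c) = j) by (apply (least_unique (Dc n) x); auto).
        assert (c = Cantor.to_nat (n, j)).
        { rewrite <- (Cantor.cancel_to_of c). rewrite (surjective_pairing (Cantor.of_nat c)).
          rewrite En, Ej. reflexivity. }
        lia.
    - intros c V HV. apply coord_cont; auto. intro p.
      apply (clopen_ext T (fun x => least (Hc c) x p)).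
      + intro x. unfold Psi. rewrite minval_Some. tauto.
      + apply least_clopen. apply Hcc. }
  destruct (H3 Psi Hcont) as [g Hg].
  set (Cm := fun m x => forall c, m <= c -> nbar_le (Psi x c) (g c)).
  assert (Cclosed : forall m, closed T (Cm m)).
  { intro m. unfold closed.
    apply (open_ext T (fun x => exists c, m <= c /\ ~ nbar_le (Psi x c) (g c))).
    - intro x; unfold Cm; split.
      + intros [c [Hc1 Hc2]] H. apply Hc2, H, Hc1.
      + intros H. apply not_all_ex_not in H. destruct H as [c Hc1]. exists c.
        apply imply_to_and in Hc1. exact Hc1.
    - apply open_exists. intro c. apply open_const_and.
      apply (coord_open T Psi Hcont c (fun a => ~ nbar_le a (g c))).
      intros _. exists (S (g c)). intros n Hn; simpl; lia. }
  exists (fun k x => Cm (fst (Cantor.of_nat k)) x /\ Dc (fst (Cantor.of_nat k)) (snd (Cantor.of_nat k)) x).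
  split.
  - intro k. apply closed_and. apply Cclosed. apply Dcc.
  - intro x. split.
    + intro Gx0. pose proof (proj1 (HG x) Gx0) as Gx.
      destruct (Hg (Psi x) (ex_intro _ x eq_refl)) as [N HN].
      pose proof (proj1 (Op_all O x) Gx N) as H.
      destruct (proj1 (Dce N x) H) as [j Hj].
      exists (Cantor.to_nat (N, j)). rewrite Cantor.cancel_of_to. simpl. split; auto.
    + intros [k [HCk HDk]]. apply (proj2 (HG x)). apply (proj2 (Op_all O x)). apply NNPP. intro Hn.
      destruct (Op_break O x Hn) as [n [H1 H2]].
      assert (Hm : Op O (fst (Cantor.of_nat k)) x) by (apply Dce; eauto).
      assert (Hmn : fst (Cantor.of_nat k) <= n).
      { destruct (le_lt_dec (fst (Cantor.of_nat k)) n) as [Hl|Hl]; auto.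
        exfalso. apply H2. apply (Op_mono O x _ _ Hm). lia. }
      destruct (proj1 (Dce n x) H1) as [j0 Hj0].
      destruct (least_exists (Dc n) x (ex_intro _ j0 Hj0)) as [j Hj].
      specialize (HCk (Cantor.to_nat (n, j))).
      pose proof (Cantor.to_nat_non_decreasing n j).
      assert (E : Psi x (Cantor.to_nat (n, j)) = None).
      { apply PsiNone. unfold A. rewrite Cantor.cancel_of_to. simpl. split; auto. }
      rewrite E in HCk. apply HCk. lia.
Qed.

Lemma p4_p1 {X} (T : topology X) :
  Ufin_O_Gamma T (fun _ => True) -> sigma_space T -> forall Y, Ufin_O_Gamma T Y.
Proof.
  intros HX Hs Y. apply ufin_of_ufinI. apply ufinI_of_ufin in HX.
  intros U HO HC HF.
  pose proof (Wm_open T U HO) as HWo.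
  destruct (Hs (fun x => forall k, exists n, Wm U k n x)) as [F [HFc HFe]].
  { exists (fun k x => exists n, Wm U k n x). split.
    - intro k. apply open_exists. intro n. apply HWo.
    - intro; reflexivity. }
  destruct (ufin_mono T (fun _ => True) HX
             (fun k n x => Wm U k n x \/ (forall m, m <= k -> ~ F m x))) as [h Hh].
  - intros k n. apply open_or; auto. apply open_fin_all_le. intros m _. apply (HFc m).
  - intros k x _. destruct (classic (exists m, m <= k /\ F m x)) as [[m [Hm Fm]]|Hn].
    + assert (Hx : forall k, exists n, Wm U k n x) by (apply HFe; eauto).
      destruct (Hx k) as [n Hn]. exists n. left; auto.
    + exists 0. right. intros m Hm Fm. apply Hn; eauto.
  - intros k n n' x Hnn [Hw|Hr]; [left; apply (Wm_mono_n U k n n'); auto | right; auto].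
  - intros k k' n x Hkk [Hw|Hr]; [left; apply (Wm_mono_k U k k'); auto | right].
    intros m Hm; apply Hr; lia.
  - exists h. intros y Yy.
    assert (Gy : forall k, exists n, Wm U k n y) by (apply Wm_cover; intro i; apply (HC i y Yy)).
    destruct (proj1 (HFe y) Gy) as [m Fm]. destruct (Hh y I) as [N HN].
    exists (max N m). intros k Hk.
    destruct (HN k ltac:(lia)) as [Hw|Hr].
    + destruct (Hw k (le_n k)) as [n [Hn Hu]]. exists n; auto.
    + exfalso; apply (Hr m); auto; lia.
Qed.

Theorem mainTheorem3 (X : Type) (T : topology X)
  (Hclopen : forall U, open T U ->
     exists C : nat -> X -> Prop, (forall n, clopen T (C n)) /\
       (forall x, U x <-> exists n, C n x)) :
  ((forall Y : X -> Prop, Ufin_O_Gamma T Y) <->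
   (forall Y : X -> Prop, Gdelta T Y -> Ufin_O_Gamma T Y)) /\
  ((forall Y : X -> Prop, Gdelta T Y -> Ufin_O_Gamma T Y) <->
   (forall Psi : X -> nat -> nbar, continuous_to_EF T Psi ->
      bounded (fun f => exists x, f = Psi x))) /\
  ((forall Psi : X -> nat -> nbar, continuous_to_EF T Psi ->
      bounded (fun f => exists x, f = Psi x)) <->
   (Ufin_O_Gamma T (fun _ => True) /\ sigma_space T)).
Proof.
  assert (H34 : (forall Psi : X -> nat -> nbar, continuous_to_EF T Psi ->
      bounded (fun f => exists x, f = Psi x)) ->
      Ufin_O_Gamma T (fun _ => True) /\ sigma_space T).
  { intros H; split.
    - apply ufin_of_ufinI. apply p3_ufin; auto.
    - apply p3_sigma; auto. }
  split; [|split].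
  - split.
    + intros H Y _; auto.
    + intros H. destruct (H34 (p2_p3 T H)) as [Ha Hb]. apply p4_p1; auto.
  - split.
    + apply p2_p3.
    + intros H Y _. destruct (H34 H) as [Ha Hb]. apply p4_p1; auto.
  - split; auto.
    intros [Ha Hb]. apply p2_p3. intros Y _. apply p4_p1; auto.
Qed.
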